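(* Consider FULLSET MALIQUOT. Then $\mathcal{SG}(n)\in\{0,1\}$, and $\mathcal{SG}(n)=1$ if and only if $n>1$ is square-free.
   Context: FULLSET MALIQUOT is the impartial normal-play game on positive integers where the single option from a heap $n>1$ is the disjunctive sum of all proper divisors of $n$ (all $d\mid n$ with $1\le d<n$); a heap of size $1$ is terminal. $\mathcal{SG}$ denotes the Sprague-Grundy value (mex rule, nim-sum). *)

(* Defs.v *)
From mathcomp Require Import all_boot.
From Stdlib Require PeanoNat.
Set Implicit Arguments. Unset Strict Implicit. Unset Printing Implicit Defensive.

Definition nimsum (a b : nat) : nat := Nat.lxor a b.

Definition mex (s : seq nat) : nat := find (fun k => k \notin s) (iota 0 (size s).+1).

Definition proper_divisors (n : nat) : seq nat := [seq d <- divisors n | d < n].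

(* For n > 1 the unique option is the disjunctive sum of the
   heaps d, d a proper divisor of n; its SG value is the nim-sum of their SG
   values, and SG n is the mex of the singleton set of option values. *)
Fixpoint sg_fuel (k n : nat) : nat :=
  match k with
  | 0 => 0
  | k'.+1 =>
      if n <= 1 then 0
      else mex [:: foldr nimsum 0 [seq sg_fuel k' d | d <- proper_divisors n]]
  end.

(* fuel n suffices: each recursive call goes to a strictly smaller heap *)
Definition sg (n : nat) : nat := sg_fuel n n.

Definition squarefree (n : nat) : Prop := forall p, prime p -> ~~ (p * p %| n).

(* Main.v *)
Require Import Defs.
From mathcomp Require Import all_boot zify.

Definition sqfb (n : nat) : bool := all (fun p => ~~ (p * p %| n)) (primes n).

Lemma sqfP {n} : 0 < n -> reflect (squarefree n) (sqfb n).
Proof.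
move=> n0; apply: (iffP allP) => [H p pp | H p].
  apply/negP => pn; have : p \in primes n.
    by rewrite mem_primes pp n0 (dvdn_trans (dvdn_mulr p (dvdnn p)) pn).
  by move/H; rewrite pn.
by rewrite mem_primes => /and3P [pp _ _]; apply: H.
Qed.

Lemma sqf_dvd {d n} : 0 < n -> d %| n -> sqfb n -> sqfb d.
Proof.
move=> n0 dn /(sqfP n0) H; have d0 : 0 < d by apply: dvdn_gt0 dn.
apply/(sqfP d0) => p pp; apply/negP => pd.
by move: (H p pp); rewrite (dvdn_trans pd dn).
Qed.

Lemma sqf_mul {d p} : 0 < d -> prime p -> ~~ (p %| d) -> sqfb d -> sqfb (d * p).
Proof.
move=> d0 pp npd /(sqfP d0) H.
have p0 : 0 < p by apply: prime_gt0.
apply/sqfP; first by rewrite muln_gt0 d0 p0.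
move=> q qp; apply/negP => qd.
case: (eqVneq q p) => [eqp | nqp].
  subst q; move: qd; rewrite dvdn_pmul2r // => pd; by rewrite pd in npd.
have cq : coprime (q * q) p.
  by rewrite coprimeMl (prime_coprime _ qp) dvdn_prime2 // nqp.
by move: qd; rewrite Gauss_dvdl // => qd; move: (H q qp); rewrite qd.
Qed.

Lemma count_split (T : Type) (a b : pred T) s :
  count a s = count (fun x => a x && b x) s + count (fun x => a x && ~~ b x) s.
Proof.
elim: s => //= x s ->; case: (a x); case: (b x) => /=; lia.
Qed.

Lemma even_sqf n : 1 < n -> ~~ odd (count sqfb (divisors n)).
Proof.
move=> n1; have n0 : 0 < n by apply: ltnW.
set p := pdiv n; have pp : prime p by apply: pdiv_prime.
have p0 : 0 < p by apply: prime_gt0.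
have pn : p %| n by apply: pdiv_dvd.
rewrite (@count_split _ sqfb (fun d => p %| d)).
suff -> : count (fun x => sqfb x && (p %| x)) (divisors n) =
          count (fun x => sqfb x && ~~ (p %| x)) (divisors n).
  by rewrite addnn odd_double.
rewrite -!size_filter.
have -> : size [seq x <- divisors n | sqfb x && ~~ (p %| x)] =
   size (map (fun d => d * p) [seq x <- divisors n | sqfb x && ~~ (p %| x)]).
  by rewrite size_map.
apply: perm_size; apply: uniq_perm.
- by apply: filter_uniq; apply: divisors_uniq.
- rewrite map_inj_uniq; first by apply: filter_uniq; apply: divisors_uniq.
  by move=> x y /eqP; rewrite eqn_pmul2r // => /eqP.
move=> x; rewrite mem_filter -dvdn_divisors //; apply/idP/idP.
  case/andP => /andP [sx px] xn; apply/mapP; exists (x %/ p); last by rewrite divnK.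
  have x0 : 0 < x by apply: dvdn_gt0 xn.
  rewrite mem_filter -dvdn_divisors // (dvdn_trans (dvdn_div px) xn) andbT.
  rewrite (sqf_dvd x0 (dvdn_div px) sx) /=.
  apply/negP => pxp; move/(sqfP x0): sx => /(_ p pp); rewrite -{1}(divnK px).
  by rewrite dvdn_pmul2r // pxp.
case/mapP => d; rewrite mem_filter -dvdn_divisors // => /andP [/andP [sd npd] dn] ->.
have d0 : 0 < d by apply: dvdn_gt0 dn.
rewrite sqf_mul // dvdn_mull //= Gauss_dvd ?dn ?pn //.
by rewrite coprime_sym prime_coprime.
Qed.

Definition gval n : nat := (1 < n) && sqfb n.

Lemma fold_xor (T : Type) (P : pred T) s :
  foldr nimsum 0 [seq nat_of_bool (P x) | x <- s] = odd (count P s).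
Proof.
elim: s => //= x s ->; rewrite oddD oddb.
by case: (P x); case: (odd (count P s)).
Qed.

Lemma mex1 (x : nat) : mex [:: x] = nat_of_bool (x == 0).
Proof. by case: x. Qed.

Lemma count_add (T : eqType) (a b c e : pred T) s :
  {in s, forall x, nat_of_bool (a x) = b x + c x + e x} ->
  count a s = count b s + count c s + count e s.
Proof.
elim: s => //= x s IH H.
rewrite IH; last by move=> y ys; apply: H; rewrite inE ys orbT.
have := H x (mem_head x s); lia.
Qed.

Lemma key n : 1 < n ->
  odd (count (fun d => (1 < d) && sqfb d) (proper_divisors n)) = ~~ sqfb n.
Proof.
move=> n1; have n0 : 0 < n by apply: ltnW.
have E := even_sqf n n1.
rewrite /proper_divisors count_filter.
have H : {in divisors n, forall d,
   nat_of_bool (sqfb d) = (d == 1) + ((d == n) && sqfb n) + (predI (fun d => (1 < d) && sqfb d) (fun d => d < n)) d}.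
  move=> d; rewrite -dvdn_divisors // => dn.
  have d0 : 0 < d by apply: dvdn_gt0 dn.
  have := dvdn_leq n0 dn; rewrite leq_eqVlt /=.
  case: (eqVneq d n) => [-> | dnn] /=.
    by rewrite ltnn (gtn_eqF n1) andbF; case: sqfb.
  move=> dlt; rewrite dlt andbT.
  case: (eqVneq d 1) => [-> | d1] /=; first by rewrite /sqfb /=.
  by have -> : 1 < d by rewrite ltn_neqAle eq_sym d1 d0.
have U := divisors_uniq n.
have M1 : 1 \in divisors n by rewrite -dvdn_divisors // dvd1n.
have Mn := divisors_id n0.
move: E; rewrite (@count_add _ _ _ _ _ _ H).
have -> : count (fun d => d == 1) (divisors n) = 1.
  by have := count_uniq_mem 1 U; rewrite M1.
have -> : count (fun d => (d == n) && sqfb n) (divisors n) = sqfb n.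
  case: (sqfb n).
    have := count_uniq_mem n U; rewrite Mn => <-; apply: eq_count => d.
    by rewrite andbT.
  by rewrite (eq_count (a2 := pred0)) ?count_pred0 // => d; rewrite andbF.
rewrite !oddD oddb.
by case: (sqfb n); case: (odd (count _ _)).
Qed.

Lemma sg_val n k : n <= k -> sg_fuel k n = gval n.
Proof.
elim: k n => [|k IH] n /=; first by rewrite leqn0 => /eqP ->.
move=> nk; case: leqP => n1; first by rewrite /gval ltnNge n1.
have -> : [seq sg_fuel k d | d <- proper_divisors n] = [seq gval d | d <- proper_divisors n].
  apply/eq_in_map => d; rewrite mem_filter => /andP [dn _]; apply: IH.
  by rewrite -ltnS (leq_trans dn).
rewrite (@fold_xor _ (fun d => (1 < d) && sqfb d)).
rewrite mex1 (key n n1) /gval n1 /=.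
by case: sqfb.
Qed.

Theorem mainTheorem14 (n : nat) (hn : 0 < n) :
  (sg n = 0 \/ sg n = 1) /\ (sg n = 1 <-> 1 < n /\ squarefree n).
Proof.
rewrite /sg sg_val // /gval.
case: ltnP => n1 /=.
  case: (sqfP hn) => H /=.
    by split; [right | split].
  by split; [left | split => //; case=> _ /H].
by split; [left | split => //; case].
Qed.
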